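(* For $0\le\alpha<1$ and $r\ge1$, put $P(r)=r^8-2\alpha^4(r^4-1)-1$. Then $P(1)=0$, $P(r)>0$ for $r>1$, and $1$ is the largest real root of $P$ and satisfies $1>\alpha$. Define $t(r)=\int_1^r \frac{s^2\sqrt{s^4-\alpha^4}}{\sqrt{P(s)}}\,ds$, and as functions of $t\ge0$ set $A_1=-\frac{\sqrt{P(r)}}{r\sqrt{r^4-\alpha^4}}$, $A_2=r$, $A_3=-r$, $B=\sqrt{r^2+\alpha^2}$, $C=\sqrt{r^2-\alpha^2}$. Then $(A_1,A_2,A_3,B,C)$ solves on $t>0$ the system $$ \begin{aligned} A_1'&=\tfrac{(A_2-A_3)^2-A_1^2}{A_2A_3}+\tfrac{A_1^2(B^2+C^2)}{B^2C^2},\quad A_2'=\tfrac{A_1^2-A_2^2+A_3^2}{A_1A_3}-\tfrac{B^2+C^2-2A_2^2}{BC},\quad A_3'=\tfrac{A_1^2+A_2^2-A_3^2}{A_1A_2}-\tfrac{B^2+C^2-2A_3^2}{BC},\\ B'&=-\tfrac{CA_1+BA_2+BA_3}{BC}-\tfrac{(C^2-B^2)(A_2+A_3)}{2A_2A_3C},\quad C'=-\tfrac{BA_1+CA_2+CA_3}{BC}-\tfrac{(B^2-C^2)(A_2+A_3)}{2A_2A_3B}, \end{aligned} $$ these functions extend smoothly to $t\in[0,\infty)$, and they satisfy: $A_1(0)=0$, $|A_1'(0)|=4$; $A_2(0)=-A_3(0)\neq0$, $A_2'(0)=A_3'(0)$; $B(0)\ne0$, $B'(0)=0$; $C(0)\neq0$,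 $C'(0)=0$; and each function has constant sign on $(0,\infty)$.
   Context: Primes denote $d/dt$. These are the smoothness conditions at the zero section for a metric $dt^2+A_1^2\eta_1^2+A_2^2\eta_2^2+A_3^2\eta_3^2+B^2(\eta_4^2+\eta_5^2)+C^2(\eta_6^2+\eta_7^2)$ to extend over the complex line bundle obtained by collapsing the circle generated by the first characteristic field of a $3$-Sasakian $7$-manifold. *)

(* Defs.v *)
From Stdlib Require Import Reals Lra.
Open Scope R_scope.

Definition Pf (alpha r : R) : R := r ^ 8 - 2 * alpha ^ 4 * (r ^ 4 - 1) - 1.

Definition integrand (alpha s : R) : R :=
  s ^ 2 * sqrt (s ^ 4 - alpha ^ 4) / sqrt (Pf alpha s).

Definition improper_int_left (f : R -> R) (a b l : R) : Prop :=
  a < b /\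
  (forall x, a < x <= b -> inhabited (Riemann_integrable f x b)) /\
  (forall eps, 0 < eps -> exists delta, 0 < delta /\
     forall x (pr : Riemann_integrable f x b),
       a < x < a + delta -> x <= b -> Rabs (RiemannInt pr - l) < eps).

Definition integral_from (f : R -> R) (a b l : R) : Prop :=
  (b = a /\ l = 0) \/ improper_int_left f a b l.

Definition smooth (f : R -> R) : Prop :=
  exists D : nat -> R -> R, D 0%nat = f /\
    forall n x, derivable_pt_lim (D n) x (D (S n) x).

Definition A1f (alpha : R) (rr : R -> R) (t : R) : R :=
  - sqrt (Pf alpha (rr t)) / (rr t * sqrt (rr t ^ 4 - alpha ^ 4)).
Definition A2f (rr : R -> R) (t : R) : R := rr t.
Definition A3f (rr : R -> R) (t : R) : R := - rr t.
Definition Bf (alpha : R) (rr : R -> R) (t : R) : R := sqrt (rr t ^ 2 + alpha ^ 2).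
Definition Cf (alpha : R) (rr : R -> R) (t : R) : R := sqrt (rr t ^ 2 - alpha ^ 2).

Definition const_sign_pos (f : R -> R) : Prop :=
  (forall t, 0 < t -> 0 < f t) \/ (forall t, 0 < t -> f t < 0).

(* Main.v *)
Require Import Defs.
From Stdlib Require Import Reals Lra Psatz Ranalysis5 Nsatz.
Open Scope R_scope.


Inductive pe := PC (c:R) | PU | PAdd (a b:pe) | PMul (a b:pe).
Fixpoint peval (x:R) (p:pe) : R :=
  match p with PC c => c | PU => x | PAdd a b => peval x a + peval x b
  | PMul a b => peval x a * peval x b end.
Fixpoint pd (p:pe) : pe :=
  match p with PC _ => PC 0 | PU => PC 1 | PAdd a b => PAdd (pd a) (pd b)
  | PMul a b => PAdd (PMul (pd a) b) (PMul a (pd b)) end.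

Lemma pd_ok p x : derivable_pt_lim (fun x => peval x p) x (peval x (pd p)).
Proof.
  induction p; simpl.
  - exact (derivable_pt_lim_const c x).
  - exact (derivable_pt_lim_id x).
  - exact (derivable_pt_lim_plus _ _ _ _ _ IHp1 IHp2).
  - exact (derivable_pt_lim_mult _ _ _ _ _ IHp1 IHp2).
Qed.

Section S.
Variable al : R.
Definition PS := PAdd (PC 1) (PMul PU PU).
Definition PS2 := PMul PS PS.
Definition PS4 := PMul PS2 PS2.
Inductive hk := kD | kQ | kB | kC.
Definition hp (k:hk) : pe :=
  match k with
  | kD => PMul (PMul (PAdd PS (PC 1)) (PAdd PS2 (PC 1))) (PAdd PS4 (PC (1 - 2*al^4)))
  | kQ => PAdd PS4 (PC (- al^4))
  | kB => PAdd PS2 (PC (al^2))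
  | kC => PAdd PS2 (PC (- al^2))
  end.

Lemma hpos (ha0 : 0 <= al) (ha1 : al < 1) k x : 0 < peval x (hp k).
Proof.
  assert (Hs : 1 <= 1 + x*x) by nra.
  set (s := 1 + x*x) in *.
  assert (Ha2 : al^2 < 1) by nra.
  assert (Ha4 : al^4 < 1) by nra.
  assert (Hs2 : 1 <= s*s) by nra.
  assert (Hs4 : 1 <= s*s*(s*s)) by nra.
  destruct k; simpl; fold s; try nra.
  apply Rmult_lt_0_compat; [apply Rmult_lt_0_compat|]; nra.
Qed.
End S.

Inductive ex := EC (c:R) | EU | ES | Esq (k:hk) | Eisq (k:hk) | EA (a b:ex) | EM (a b:ex).

Fixpoint pe2ex (p:pe) : ex :=
  match p with PC c => EC c | PU => EU | PAdd a b => EA (pe2ex a) (pe2ex b)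
  | PMul a b => EM (pe2ex a) (pe2ex b) end.

Section S.
Variable al : R.
Hypothesis ha0 : 0 <= al.
Hypothesis ha1 : al < 1.

Fixpoint eval (x:R) (e:ex) : R :=
  match e with
  | EC c => c | EU => x | ES => / (1 + x*x)
  | Esq k => sqrt (peval x (hp al k))
  | Eisq k => / sqrt (peval x (hp al k))
  | EA a b => eval x a + eval x b
  | EM a b => eval x a * eval x b end.

Lemma pe2ex_ok x p : eval x (pe2ex p) = peval x p.
Proof. induction p; simpl; congruence. Qed.

Definition du (e:ex) : ex :=
  match e with
  | EU => EC 1
  | ES => EM (EC (-2)) (EM EU (EM ES ES))
  | Esq k => EM (EC (1/2)) (EM (pe2ex (pd (hp al k))) (Eisq k))
  | Eisq k => EM (EC (-1/2)) (EM (pe2ex (pd (hp al k))) (EM (Eisq k) (EM (Eisq k) (Eisq k))))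
  | _ => EC 0
  end.

Fixpoint dd (w:ex) (e:ex) : ex :=
  match e with
  | EC _ => EC 0
  | EA a b => EA (dd w a) (dd w b)
  | EM a b => EA (EM (dd w a) b) (EM a (dd w b))
  | a => EM (du a) w
  end.

Lemma sqrt_pos_h k x : 0 < sqrt (peval x (hp al k)).
Proof. apply sqrt_lt_R0, hpos; auto. Qed.

Lemma atom_U x : derivable_pt_lim (fun x => eval x EU) x (eval x (du EU)).
Proof. exact (derivable_pt_lim_id x). Qed.

Lemma atom_S x : derivable_pt_lim (fun x => eval x ES) x (eval x (du ES)).
Proof.
  simpl.
  assert (H := derivable_pt_lim_div (fct_cte 1) (fun x => 1 + x*x) x 0 (0 + (1*x + x*1))
    (derivable_pt_lim_const 1 x)
    (derivable_pt_lim_plus _ _ _ _ _ (derivable_pt_lim_const 1 x)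
       (derivable_pt_lim_mult _ _ _ _ _ (derivable_pt_lim_id x) (derivable_pt_lim_id x)))).
  assert (Hs : 1 + x*x <> 0) by nra.
  specialize (H Hs).
  eapply derivable_pt_lim_ext; [|replace (-2 * (x * (/ (1 + x * x) * / (1 + x * x)))) with
     ((0 * (1 + x * x) - (0 + (1 * x + x * 1)) * fct_cte 1 x) / (1 + x * x)²); [exact H|]].
  - intro z; unfold div_fct, fct_cte; simpl. field. nra.
  - unfold fct_cte, Rsqr. field. exact Hs.
Qed.

Lemma atom_sq k x : derivable_pt_lim (fun x => eval x (Esq k)) x (eval x (du (Esq k))).
Proof.
  simpl. rewrite pe2ex_ok.
  assert (Hp := hpos al ha0 ha1 k x).
  assert (H := derivable_pt_lim_comp (fun x => peval x (hp al k)) sqrt x _ _ (pd_ok (hp al k) x)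
     (derivable_pt_lim_sqrt _ Hp)).
  replace (1 / 2 * (peval x (pd (hp al k)) * / sqrt (peval x (hp al k)))) with
     (/ (2 * sqrt (peval x (hp al k))) * peval x (pd (hp al k))).
  - exact H.
  - assert (Hq := sqrt_pos_h k x). field. lra.
Qed.

Lemma atom_isq k x : derivable_pt_lim (fun x => eval x (Eisq k)) x (eval x (du (Eisq k))).
Proof.
  simpl. rewrite pe2ex_ok.
  assert (Hp := hpos al ha0 ha1 k x).
  assert (Hq := sqrt_pos_h k x).
  assert (H := derivable_pt_lim_comp (fun x => peval x (hp al k)) sqrt x _ _ (pd_ok (hp al k) x)
     (derivable_pt_lim_sqrt _ Hp)).
  assert (H2 := derivable_pt_lim_div (fct_cte 1) (comp sqrt (fun x => peval x (hp al k))) x _ _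
     (derivable_pt_lim_const 1 x) H).
  unfold comp in H2. specialize (H2 ltac:(lra)).
  eapply derivable_pt_lim_ext; [|eapply (fun h => eq_ind _ _ H2 _ h)].
  - intro z; unfold div_fct, fct_cte, comp; simpl. field.
    apply Rgt_not_eq, sqrt_pos_h.
  - unfold fct_cte, Rsqr. field. lra.
Qed.

Lemma dd_ok (v : R -> R) (w : ex) :
  (forall t, derivable_pt_lim v t (eval (v t) w)) ->
  forall e t, derivable_pt_lim (fun t => eval (v t) e) t (eval (v t) (dd w e)).
Proof.
  intros Hv e t.
  assert (Hat : forall a, (forall x, derivable_pt_lim (fun x => eval x a) x (eval x (du a))) ->
     derivable_pt_lim (fun t => eval (v t) a) t (eval (v t) (EM (du a) w))).
  { intros a Ha. simpl.
    exact (derivable_pt_lim_comp v (fun x => eval x a) t _ _ (Hv t) (Ha (v t))). }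
  induction e; simpl dd.
  - exact (derivable_pt_lim_const c t).
  - apply Hat, atom_U.
  - apply Hat, atom_S.
  - apply Hat, atom_sq.
  - apply Hat, atom_isq.
  - exact (derivable_pt_lim_plus _ _ _ _ _ IHe1 IHe2).
  - exact (derivable_pt_lim_mult _ _ _ _ _ IHe1 IHe2).
Qed.

Lemma dx_ok e x : derivable_pt_lim (fun x => eval x e) x (eval x (dd (EC 1) e)).
Proof.
  exact (dd_ok (fun x => x) (EC 1) (fun t => derivable_pt_lim_id t) e x).
Qed.

Lemma eval_cont e x : continuity_pt (fun x => eval x e) x.
Proof.
  apply derivable_continuous_pt. exists (eval x (dd (EC 1) e)). apply dx_ok.
Qed.

Lemma smooth_eval (v : R -> R) (w : ex) :
  (forall t, derivable_pt_lim v t (eval (v t) w)) ->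
  forall e, smooth (fun t => eval (v t) e).
Proof.
  intros Hv e. exists (fun n t => eval (v t) (Nat.iter n (dd w) e)). split.
  - reflexivity.
  - intros n x. simpl. apply dd_ok; auto.
Qed.
End S.

Lemma dlim_local (f1 f2 : R -> R) x l eps : 0 < eps ->
  (forall y, Rabs (y - x) < eps -> f1 y = f2 y) ->
  derivable_pt_lim f2 x l -> derivable_pt_lim f1 x l.
Proof.
  intros He Heq H e he. destruct (H e he) as [d Hd].
  assert (Hm : 0 < Rmin d eps) by (apply Rmin_pos; [apply cond_pos|auto]).
  exists (mkposreal _ Hm). intros h hnz hlt. simpl in hlt.
  rewrite (Heq (x+h)), (Heq x).
  - apply Hd; auto. eapply Rlt_le_trans; [exact hlt| apply Rmin_l].
  - rewrite Rminus_diag, Rabs_R0; auto.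
  - replace (x+h-x) with h by ring. eapply Rlt_le_trans; [exact hlt| apply Rmin_r].
Qed.

Lemma prim_val (f : R -> R) a b (h : a <= b) (pr : forall x, a <= x -> x <= b -> Riemann_integrable f a x) y (H1 : a <= y) (H2 : y <= b) :
  primitive h pr y = RiemannInt (pr y H1 H2).
Proof.
  unfold primitive. destruct (Rle_dec a y) as [Ha|Ha]; [|exfalso; apply Ha; exact H1]. destruct (Rle_dec y b) as [Hb|Hb]; [|exfalso; apply Hb; exact H2].
  apply RiemannInt_P5.
Qed.

Lemma ftc f F a b (pr : Riemann_integrable f a b) : a <= b ->
  (forall x, a <= x <= b -> continuity_pt f x) ->
  (forall x, a <= x <= b -> derivable_pt_lim F x (f x)) ->
  RiemannInt pr = F b - F a.
Proof.
  intros h C0 HF.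
  rewrite (RiemannInt_P20 h (FTC_P1 h C0) pr).
  assert (H1 := RiemannInt_P29 h C0).
  assert (H2 : antiderivative f F a b).
  { split; auto. intros x Hx. exists (exist _ (f x) (HF x Hx)). reflexivity. }
  destruct (antiderivative_Ucte _ _ _ _ _ H1 H2) as [c Hc].
  rewrite (Hc b), (Hc a); [ring|lra|lra].
Qed.

Section S.
Variable al : R.
Hypothesis ha0 : 0 <= al.
Hypothesis ha1 : al < 1.

Definition Up := EM (EC (1/2)) (EM (Esq kD) (EM (Eisq kQ) (EM ES ES))).
Lemma Up_pos x : 0 < eval al x Up.
Proof.
  unfold Up; cbn [eval]. assert (H1 := sqrt_pos_h al ha0 ha1 kD x). assert (H2 := sqrt_pos_h al ha0 ha1 kQ x).
  assert (H3 : 0 < / (1 + x*x)) by (apply Rinv_0_lt_compat; nra).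
  assert (0 < / sqrt (peval x (hp al kQ))) by (apply Rinv_0_lt_compat; auto).
  repeat apply Rmult_lt_0_compat; lra.
Qed.

Definition g x := / eval al x Up.
Lemma g_pos x : 0 < g x.
Proof. apply Rinv_0_lt_compat, Up_pos. Qed.
Lemma g_cont x : continuity_pt g x.
Proof. apply continuity_pt_inv. apply eval_cont; auto. apply Rgt_not_eq, Up_pos. Qed.

Definition gint a b : Riemann_integrable g a b.
Proof.
  destruct (Rle_dec a b).
  - apply continuity_implies_RiemannInt; auto. intros; apply g_cont.
  - apply RiemannInt_P1. apply continuity_implies_RiemannInt; [apply Rlt_le, Rnot_le_lt; assumption|]. intros; apply g_cont.
Defined.

Definition G v := RiemannInt (gint 0 v).

Lemma G0 : G 0 = 0.
Proof. unfold G. apply RiemannInt_P9. Qed.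

Lemma G_deriv v : derivable_pt_lim G v (g v).
Proof.
  assert (h : v - 1 <= v + 1) by lra.
  assert (C0 : forall x, v-1 <= x <= v+1 -> continuity_pt g x) by (intros; apply g_cont).
  apply (dlim_local G (fun y => G (v-1) + primitive h (FTC_P1 h C0) y) v (g v) 1 Rlt_0_1).
  - intros y Hy. apply Rabs_def2 in Hy.
    rewrite (prim_val _ _ _ h _ y ltac:(lra) ltac:(lra)).
    unfold G. symmetry. apply RiemannInt_P26.
  - replace (g v) with (0 + g v) by ring.
    apply (derivable_pt_lim_plus (fct_cte (G (v-1))) (primitive h (FTC_P1 h C0))).
    + apply derivable_pt_lim_const.
    + apply RiemannInt_P28; lra.
Qed.

Lemma G_derivable : derivable G.
Proof. intro x. exists (g x). apply G_deriv. Defined.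

Lemma G_incr x y : x < y -> G x < G y.
Proof.
  intro Hxy. apply (derive_increasing_interv (x-1) (y+1) G G_derivable); try lra.
  intros t _. unfold G_derivable. simpl. apply g_pos.
Qed.

Lemma G_cont : continuity G.
Proof. intro x. apply derivable_continuous_pt, G_derivable. Qed.
End S.

Section S.
Variable al : R.
Hypothesis ha0 : 0 <= al.
Hypothesis ha1 : al < 1.

Definition K := 2 / (1 - al^4) + 1.

Lemma Up_le x : eval al x Up <= K.
Proof.
  assert (Ha4 : al^4 < 1) by (assert (al^2 < 1) by nra; nra).
  assert (Ha4' : 0 <= al^4) by (apply pow_le; auto).
  assert (HU := Up_pos al ha0 ha1 x).
  assert (Hc : eval al x Up ^ 2 <= 2 / (1 - al^4)).
  { unfold Up in *; cbn [eval] in *.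
    assert (H1 := sqrt_pos_h al ha0 ha1 kD x). assert (H2 := sqrt_pos_h al ha0 ha1 kQ x).
    assert (E1 := sqrt_sqrt _ (Rlt_le _ _ (hpos al ha0 ha1 kD x))).
    assert (E2 := sqrt_sqrt _ (Rlt_le _ _ (hpos al ha0 ha1 kQ x))).
    set (a := sqrt (peval x (hp al kD))) in *.
    set (b := sqrt (peval x (hp al kQ))) in *.
    cbn in E1, E2.
    set (s := 1 + x * x) in *.
    assert (Hs : 1 <= s) by (unfold s; nra).
    replace (1 / 2 * (a * (/ b * (/ s * / s)))) with (a / (2 * b * s^2)) by (field; lra).
    assert (Hs4 : 0 < s^4) by (apply pow_lt; lra).
    assert (HD : a*a <= 8 * s^8).
    { rewrite E1.
      assert (0 <= s*s*(s*s) + (1 - 2*(al*(al*(al*(al*1)))))) by nra.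
      assert (s*s*(s*s) + (1 - 2*(al*(al*(al*(al*1))))) <= 2 * s^4) by nra.
      assert ((s+1)*(s*s+1) <= 4 * s^3) by nra.
      assert (0 <= (s+1)*(s*s+1)) by nra.
      assert (s^7 <= s^8) by (replace (s^8) with (s^7*s) by ring; assert (0 < s^7) by (apply pow_lt; lra); nra).
      nra. }
    assert (HQ : (1 - al^4) * s^4 <= b*b).
    { rewrite E2. replace (al*(al*(al*(al*1)))) with (al^4) by ring.
      assert (1 <= s^4) by (replace 1 with (1^4) by ring; apply pow_incr; lra). nra. }
    unfold Rdiv. rewrite Rpow_mult_distr, pow_inv.
    assert (0 < (2*b*s^2)^2) by (apply pow_lt; nra).
    apply (Rmult_le_reg_r ((2*b*s^2)^2)); auto.
    rewrite Rmult_assoc, Rinv_l by lra.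
    replace ((2 * b * s ^ 2) ^ 2) with (4 * (b*b) * s^4) by ring.
    apply (Rmult_le_reg_r (1 - al^4)); [lra|].
    replace (2 * / (1 - al ^ 4) * (4 * (b * b) * s ^ 4) * (1 - al ^ 4)) with (8 * (b*b) * s^4) by (field; lra).
    assert (8 * s^8 * (1 - al^4) <= 8 * (b*b) * s^4).
    { replace (s^8) with (s^4*s^4) by ring. nra. }
    nra. }
  unfold K. set (c := 2 / (1 - al^4)) in *.
  destruct (Rle_dec (eval al x Up) 1); [|assert (eval al x Up <= eval al x Up ^ 2)]; try nra.
Qed.

Lemma K_pos : 0 < K.
Proof.
  assert (Ha4 : al^4 < 1) by (assert (al^2 < 1) by nra; nra).
  unfold K. assert (0 < 2 / (1 - al^4)) by (apply Rdiv_lt_0_compat; lra). lra.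
Qed.

Lemma g_ge x : / K <= g al x.
Proof.
  unfold g. apply Rinv_le_contravar; [apply Up_pos; auto|apply Up_le].
Qed.

Lemma G_lower a b : a <= b -> (b - a) / K <= G al ha0 ha1 b - G al ha0 ha1 a.
Proof.
  intros [Hab|Hab].
  - destruct (MVT_cor1 (G al ha0 ha1) a b (G_derivable al ha0 ha1) Hab) as [c [Hc _]].
    rewrite Hc. unfold G_derivable. simpl.
    assert (H := g_ge c). unfold Rdiv. rewrite Rmult_comm. apply Rmult_le_compat_r; lra.
  - subst. unfold Rdiv. rewrite !Rminus_diag, Rmult_0_l. lra.
Qed.

Lemma u_ex t : {z | G al ha0 ha1 z = t}.
Proof.
  assert (HK := K_pos).
  set (M := (Rabs t + 1) * K).
  assert (HM : 0 < M) by (unfold M; assert (0 <= Rabs t) by apply Rabs_pos; nra).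
  assert (L1 := G_lower (-M) 0 ltac:(lra)). assert (L2 := G_lower 0 M ltac:(lra)).
  rewrite (G0 al ha0 ha1) in L1, L2.
  replace ((0 - - M) / K) with (Rabs t + 1) in L1 by (unfold M; field; lra).
  replace ((M - 0) / K) with (Rabs t + 1) in L2 by (unfold M; field; lra).
  assert (Ht := Rle_abs t). assert (Ht' : - t <= Rabs t) by (rewrite <- Rabs_Ropp; apply Rle_abs).
  destruct (IVT (fun x => G al ha0 ha1 x - t) (-M) M) as [z [_ Hz]].
  - intro x. apply continuity_pt_minus; [apply G_cont; auto| apply continuity_pt_const; intros ? ?; auto].
  - lra.
  - lra.
  - lra.
  - exists z. lra.
Qed.

Definition u t := proj1_sig (u_ex t).
Lemma Gu t : G al ha0 ha1 (u t) = t.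
Proof. unfold u. destruct (u_ex t); auto. Qed.

Lemma G_inj x y : G al ha0 ha1 x = G al ha0 ha1 y -> x = y.
Proof.
  intro H. destruct (Rtotal_order x y) as [h|[h|h]]; auto;
  apply (G_incr al ha0 ha1) in h; lra.
Qed.

Lemma uG v : u (G al ha0 ha1 v) = v.
Proof. apply G_inj. apply Gu. Qed.

Lemma u_incr x y : x <= y -> u x <= u y.
Proof.
  intro H. destruct (Rle_dec (u x) (u y)) as [h|h]; auto.
  apply Rnot_le_lt in h. apply (G_incr al ha0 ha1) in h. rewrite !Gu in h. lra.
Qed.

Lemma u_deriv t : derivable_pt_lim u t (eval al (u t) Up).
Proof.
  assert (Hc : continuity_pt u t).
  { apply (continuity_pt_recip_interv (G al ha0 ha1) u (u t - 1) (u t + 1)).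
    - lra.
    - intros; apply G_incr; auto; lra.
    - intros; unfold comp, id; apply Gu.
    - intros x H1 H2. split.
      + destruct (Rle_dec (u t - 1) (u x)) as [h|h]; auto. apply Rnot_le_lt in h.
        apply (G_incr al ha0 ha1) in h. rewrite Gu in h. lra.
      + destruct (Rle_dec (u x) (u t + 1)) as [h|h]; auto. apply Rnot_le_lt in h.
        apply (G_incr al ha0 ha1) in h. rewrite Gu in h. lra.
    - intros; apply derivable_continuous_pt, G_derivable; auto.
    - rewrite <- (Gu t) at 2 3. split; apply G_incr; auto; lra. }
  assert (Hi : u (t-1) <= u t <= u (t+1)) by (split; apply u_incr; lra).
  assert (H := derivable_pt_lim_recip_interv (G al ha0 ha1) u (t-1) (t+1) t
     (fun a _ => G_derivable al ha0 ha1 a) Hc ltac:(lra) ltac:(lra) Hi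
     (fun x _ => Gu x)).
  unfold G_derivable, derive_pt in H; simpl in H.
  assert (HU := Up_pos al ha0 ha1 (u t)).
  unfold g in H. replace (eval al (u t) Up) with (1 / / eval al (u t) Up) by (field; lra).
  apply H. apply Rgt_not_eq, Rinv_0_lt_compat; auto.
Qed.
End S.

Lemma al4_lt (al : R) : 0 <= al -> al < 1 -> 0 <= al^4 < 1.
Proof. intros. split; [apply pow_le; auto|]. assert (al^2 < 1) by nra. nra. Qed.

Lemma Pf_fact al y : Pf al y = (y^4 - 1) * (y^4 + 1 - 2 * al^4).
Proof. unfold Pf. ring. Qed.

Lemma Pf_pos al y : 0 <= al -> al < 1 -> 1 < y -> 0 < Pf al y.
Proof.
  intros. rewrite Pf_fact. destruct (al4_lt al) as [h1 h2]; auto.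
  assert (1 < y^4) by (assert (1 < y^2) by nra; nra).
  apply Rmult_lt_0_compat; lra.
Qed.

Section S.
Variable al : R.
Hypothesis ha0 : 0 <= al.
Hypothesis ha1 : al < 1.

Lemma integrand_cont y : 1 < y -> continuity_pt (integrand al) y.
Proof.
  intro Hy. assert (HP := Pf_pos al y ha0 ha1 Hy). unfold Pf in HP.
  destruct (al4_lt al) as [h1 h2]; auto.
  assert (1 < y^4) by (assert (1 < y^2) by nra; nra).
  unfold integrand, Pf. reg; try lra.
  apply Rgt_not_eq, sqrt_lt_R0; auto.
Qed.

Definition H s := G al ha0 ha1 (sqrt (s - 1)).

Lemma H1 : H 1 = 0.
Proof. unfold H. rewrite Rminus_diag, sqrt_0. apply G0. Qed.

Lemma integrand_w w : 0 < w -> integrand al (1 + w*w) = g al w / (2 * w).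
Proof.
  intro Hw. unfold integrand, g, Up. cbn [eval].
  assert (HD := hpos al ha0 ha1 kD w). assert (HQ := hpos al ha0 ha1 kQ w).
  assert (E1 : sqrt ((1 + w*w)^4 - al^4) = sqrt (peval w (hp al kQ))) by (f_equal; cbn; ring).
  assert (E2 : sqrt (Pf al (1 + w*w)) = w * sqrt (peval w (hp al kD))).
  { replace (Pf al (1 + w*w)) with ((w*w) * peval w (hp al kD)) by (unfold Pf; cbn; ring).
    rewrite sqrt_mult by (nra || lra). rewrite sqrt_square by lra. reflexivity. }
  rewrite E1, E2.
  assert (0 < sqrt (peval w (hp al kD))) by (apply sqrt_lt_R0; auto).
  assert (0 < sqrt (peval w (hp al kQ))) by (apply sqrt_lt_R0; auto).
  field. repeat split; try lra; nra.
Qed.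

Lemma H_deriv s : 1 < s -> derivable_pt_lim H s (integrand al s).
Proof.
  intro Hs. set (w := sqrt (s - 1)).
  assert (Hw : 0 < w) by (apply sqrt_lt_R0; lra).
  assert (Hww : w * w = s - 1) by (apply sqrt_sqrt; lra).
  assert (D1 : derivable_pt_lim (fun s => sqrt (s - 1)) s (/ (2 * w) * 1)).
  { apply (derivable_pt_lim_comp (fun s => s - 1) sqrt s).
    - assert (h := derivable_pt_lim_minus id (fct_cte 1) s 1 0 (derivable_pt_lim_id s) (derivable_pt_lim_const 1 s)).
      rewrite Rminus_0_r in h. exact h.
    - apply derivable_pt_lim_sqrt. lra. }
  assert (D2 := derivable_pt_lim_comp _ _ s _ _ D1 (G_deriv al ha0 ha1 (sqrt (s-1)))).
  replace s with (1 + w*w) at 2 by lra. rewrite integrand_w by auto.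
  change (sqrt (s - 1)) with w in D2.
  replace (g al w / (2 * w)) with (g al w * (/ (2 * w) * 1)) by (field; lra).
  exact D2.
Qed.

Lemma int_val x b (pr : Riemann_integrable (integrand al) x b) : 1 < x -> x <= b ->
  RiemannInt pr = H b - H x.
Proof.
  intros. apply ftc; auto.
  - intros; apply integrand_cont; lra.
  - intros; apply H_deriv; lra.
Qed.

Lemma H_cont1 : forall eps, 0 < eps -> exists d, 0 < d /\
  forall x, 1 <= x < 1 + d -> Rabs (H x) < eps.
Proof.
  intros eps he.
  assert (C : continuity_pt H 1).
  { unfold H. apply (continuity_pt_comp (fun s => sqrt (s - 1)) (G al ha0 ha1)).
    - apply (continuity_pt_comp (fun s => s - 1) sqrt).
      + apply continuity_pt_minus; [apply derivable_continuous_pt, derivable_id|apply continuity_pt_const; intros ? ?; auto].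
      + apply continuity_pt_sqrt. lra.
    - apply G_cont. }
  destruct (C eps he) as [d [Hd Hd2]]. exists d. split; auto.
  intros x Hx. destruct (Req_dec x 1) as [E|E].
  { subst. rewrite H1, Rabs_R0. auto. }
  rewrite <- (Rminus_0_r (H x)), <- H1. apply (Hd2 x). split.
  - split; [constructor| auto].
  - simpl. unfold R_dist. rewrite Rabs_right; lra.
Qed.

Lemma improper_ok b : 1 < b -> improper_int_left (integrand al) 1 b (H b).
Proof.
  intro Hb. split; [auto|split].
  - intros x Hx. constructor. apply continuity_implies_RiemannInt; [lra|].
    intros; apply integrand_cont; lra.
  - intros eps he. destruct (H_cont1 eps he) as [d [Hd Hd2]]. exists d. split; auto.
    intros x pr Hx Hxb. rewrite int_val by lra.
    replace (H b - H x - H b) with (- H x) by ring. rewrite Rabs_Ropp. apply Hd2. lra.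
Qed.

Lemma integral_ok b : 1 <= b -> integral_from (integrand al) 1 b (H b).
Proof.
  intros [Hb|Hb].
  - right. apply improper_ok; auto.
  - left. subst. split; auto. apply H1.
Qed.

Lemma integral_unique b l : integral_from (integrand al) 1 b l -> l = H b.
Proof.
  intros [[Hb Hl]|[Hb [Hinh Heps]]].
  - subst. rewrite H1; auto.
  - destruct (Req_dec l (H b)) as [E|E]; auto. exfalso.
    set (eps := Rabs (l - H b) / 2).
    assert (he : 0 < eps) by (unfold eps; assert (0 < Rabs (l - H b)) by (apply Rabs_pos_lt; lra); lra).
    destruct (Heps eps he) as [d1 [Hd1 Hd1']].
    destruct (H_cont1 eps he) as [d2 [Hd2 Hd2']].
    set (x := 1 + Rmin (Rmin d1 d2) (b - 1) / 2).
    assert (Hm : 0 < Rmin (Rmin d1 d2) (b - 1)) by (repeat apply Rmin_pos; lra).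
    assert (Hm1 := Rmin_l (Rmin d1 d2) (b-1)). assert (Hm2 := Rmin_r (Rmin d1 d2) (b-1)).
    assert (Hm3 := Rmin_l d1 d2). assert (Hm4 := Rmin_r d1 d2).
    destruct (Hinh x ltac:(unfold x; lra)) as [pr].
    assert (A1 := Hd1' x pr ltac:(unfold x; lra) ltac:(unfold x; lra)).
    assert (A2 := Hd2' x ltac:(unfold x; lra)).
    rewrite int_val in A1 by (unfold x; lra).
    assert (Rabs (l - H b) <= Rabs (H b - H x - l) + Rabs (H x)).
    { replace (l - H b) with (- (H b - H x - l) - H x) by ring.
      eapply Rle_trans; [apply Rabs_triang|]. rewrite Rabs_Ropp, Rabs_Ropp. lra. }
    unfold eps in *. lra.
Qed.
End S.

Definition e1 := EM (EC (-1)) (EM EU (EM (Esq kD) (EM ES (Eisq kQ)))).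
Definition e2 := EA (EC 1) (EM EU EU).
Definition e3 := EM (EC (-1)) e2.
Definition eB := Esq kB.
Definition eC := Esq kC.

Ltac prep al ha0 ha1 x :=
  unfold e1, e3, e2, eB, eC, Up; cbn [eval dd du]; rewrite ?pe2ex_ok;
  let HD := fresh in let HQ := fresh in let HB := fresh in let HC := fresh in
  assert (HD := hpos al ha0 ha1 kD x); assert (HQ := hpos al ha0 ha1 kQ x);
  assert (HB := hpos al ha0 ha1 kB x); assert (HC := hpos al ha0 ha1 kC x);
  assert (ED := sqrt_sqrt _ (Rlt_le _ _ HD)); assert (EQ := sqrt_sqrt _ (Rlt_le _ _ HQ));
  assert (EB := sqrt_sqrt _ (Rlt_le _ _ HB)); assert (EC := sqrt_sqrt _ (Rlt_le _ _ HC));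
  assert (PD := sqrt_lt_R0 _ HD); assert (PQ := sqrt_lt_R0 _ HQ);
  assert (PB := sqrt_lt_R0 _ HB); assert (PC := sqrt_lt_R0 _ HC);
  set (sD := sqrt (peval x (hp al kD))) in *;
  set (sQ := sqrt (peval x (hp al kQ))) in *;
  set (sB := sqrt (peval x (hp al kB))) in *;
  set (sC := sqrt (peval x (hp al kC))) in *;
  clearbody sD sQ sB sC;
  cbn [peval pd hp PS PS2 PS4] in *;
  assert (0 < 1 + x*x) by nra;
  assert (E2 : forall y, y^2 = y*y) by (intro; ring);
  assert (E4 : forall y, y^4 = (y*y)*(y*y)) by (intro; ring).

Ltac fin := repeat split; try lra; nra.


Section S.
Variable al : R.
Hypothesis ha0 : 0 <= al.
Hypothesis ha1 : al < 1.

Lemma ode_alg x : 0 < x ->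
  let A1 := eval al x e1 in let A2 := eval al x e2 in let A3 := eval al x e3 in
  let B := eval al x eB in let C := eval al x eC in
  eval al x (dd al Up e1) =
         (((A2 - A3) ^ 2 - A1 ^ 2) / (A2 * A3)
          + A1 ^ 2 * (B ^ 2 + C ^ 2) / (B ^ 2 * C ^ 2)) /\
  eval al x (dd al Up e2) =
         ((A1 ^ 2 - A2 ^ 2 + A3 ^ 2) / (A1 * A3)
          - (B ^ 2 + C ^ 2 - 2 * A2 ^ 2) / (B * C)) /\
  eval al x (dd al Up e3) =
         ((A1 ^ 2 + A2 ^ 2 - A3 ^ 2) / (A1 * A2)
          - (B ^ 2 + C ^ 2 - 2 * A3 ^ 2) / (B * C)) /\
  eval al x (dd al Up eB) =
         (- (C * A1 + B * A2 + B * A3) / (B * C)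
          - (C ^ 2 - B ^ 2) * (A2 + A3) / (2 * A2 * A3 * C)) /\
  eval al x (dd al Up eC) =
         (- (B * A1 + C * A2 + C * A3) / (B * C)
          - (B ^ 2 - C ^ 2) * (A2 + A3) / (2 * A2 * A3 * B)).
Proof.
  intros Hx. cbv zeta. prep al ha0 ha1 x.
  repeat split; (field_simplify_eq; [rewrite ?E2, ?E4, ?ED, ?EQ, ?EB, ?EC; ring | fin]).
Qed.
End S.

Section S.
Variable al : R.
Hypothesis ha0 : 0 <= al.
Hypothesis ha1 : al < 1.

Definition U := u al ha0 ha1.

Lemma U0 : U 0 = 0.
Proof. unfold U. rewrite <- (G0 al ha0 ha1) at 1. apply uG. Qed.

Lemma U_pos t : 0 < t -> 0 < U t.
Proof.
  intro Ht. destruct (Rle_dec (U t) 0) as [h|h]; [|lra]. exfalso.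
  destruct h as [h|h].
  - apply (G_incr al ha0 ha1) in h. unfold U in h. rewrite Gu, G0 in h. lra.
  - unfold U in h. assert (E := Gu al ha0 ha1 t). rewrite h, G0 in E. lra.
Qed.

Lemma U_nonneg t : 0 <= t -> 0 <= U t.
Proof. intros [h|h]; [apply Rlt_le, U_pos; auto| subst; rewrite U0; lra]. Qed.

Lemma H_U t : 0 <= t -> H al ha0 ha1 (1 + U t * U t) = t.
Proof.
  intro Ht. unfold H. replace (1 + U t * U t - 1) with (U t * U t) by ring.
  rewrite sqrt_square by (apply U_nonneg; auto). apply Gu.
Qed.

Lemma H_inv r t : 1 <= r -> t = H al ha0 ha1 r -> r = 1 + U t * U t.
Proof.
  intros Hr Ht. unfold H in Ht. subst t. unfold U. rewrite uG.
  rewrite sqrt_sqrt by lra. ring.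
Qed.

Lemma A_eqs (rr : R -> R) t : 0 <= t -> rr t = 1 + U t * U t ->
  A1f al rr t = eval al (U t) e1 /\ A2f rr t = eval al (U t) e2 /\
  A3f rr t = eval al (U t) e3 /\ Bf al rr t = eval al (U t) eB /\
  Cf al rr t = eval al (U t) eC.
Proof.
  intros Ht Hr. assert (Hx := U_nonneg t Ht). set (x := U t) in *.
  unfold A1f, A2f, A3f, Bf, Cf, e1, e3, e2, eB, eC. cbn [eval]. rewrite Hr.
  assert (HD := hpos al ha0 ha1 kD x). assert (HQ := hpos al ha0 ha1 kQ x).
  assert (E1 : sqrt ((1 + x*x)^4 - al^4) = sqrt (peval x (hp al kQ))) by (f_equal; cbn; ring).
  assert (E2 : sqrt (Pf al (1 + x*x)) = x * sqrt (peval x (hp al kD))).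
  { replace (Pf al (1 + x*x)) with ((x*x) * peval x (hp al kD)) by (unfold Pf; cbn; ring).
    rewrite sqrt_mult by (nra || lra). rewrite sqrt_square by lra. reflexivity. }
  assert (E3 : sqrt ((1 + x*x)^2 + al^2) = sqrt (peval x (hp al kB))) by (f_equal; cbn; ring).
  assert (E4 : sqrt ((1 + x*x)^2 - al^2) = sqrt (peval x (hp al kC))) by (f_equal; cbn; ring).
  rewrite E1, E2, E3, E4.
  assert (0 < sqrt (peval x (hp al kQ))) by (apply sqrt_lt_R0; auto).
  repeat split; try ring. field. split; try lra. nra.
Qed.

Lemma rr_eq (rr : R -> R) :
  (forall t, 0 <= t -> 1 <= rr t /\ integral_from (integrand al) 1 (rr t) t) ->
  forall t, 0 <= t -> rr t = 1 + U t * U t.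
Proof.
  intros Hrr t Ht. destruct (Hrr t Ht) as [h1 h2].
  apply H_inv; auto. apply integral_unique; auto.
Qed.

Lemma val0 :
  eval al 0 e1 = 0 /\ eval al 0 (dd al Up e1) = -4 /\
  eval al 0 e2 = - eval al 0 e3 /\ eval al 0 e2 <> 0 /\
  eval al 0 (dd al Up e2) = 0 /\ eval al 0 (dd al Up e3) = 0 /\
  eval al 0 eB <> 0 /\ eval al 0 (dd al Up eB) = 0 /\
  eval al 0 eC <> 0 /\ eval al 0 (dd al Up eC) = 0.
Proof.
  prep al ha0 ha1 0.
  repeat split; try (field_simplify_eq; [rewrite ?E2, ?E4, ?ED, ?EQ, ?EB, ?EC; ring | fin]); try lra.
Qed.
End S.
Theorem mainTheorem4 (alpha : R) (ha0 : 0 <= alpha) (ha1 : alpha < 1) :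
  Pf alpha 1 = 0 /\
  (forall r, 1 < r -> 0 < Pf alpha r) /\
  (forall r, Pf alpha r = 0 -> r <= 1) /\
  1 > alpha /\
  (* t(r) is well defined for r >= 1 *)
  (forall r, 1 <= r -> exists l, integral_from (integrand alpha) 1 r l) /\
  (* r is a well-defined function of t >= 0 *)
  (forall t, 0 <= t -> exists! r, 1 <= r /\ integral_from (integrand alpha) 1 r t) /\
  (forall rr : R -> R,
    (forall t, 0 <= t -> 1 <= rr t /\ integral_from (integrand alpha) 1 (rr t) t) ->
    let A1 := A1f alpha rr in
    let A2 := A2f rr in
    let A3 := A3f rr in
    let B := Bf alpha rr in
    let C := Cf alpha rr in
    (* the ODE system on t > 0 *)
    (forall t, 0 < t ->
       derivable_pt_lim A1 t
         (((A2 t - A3 t) ^ 2 - A1 t ^ 2) / (A2 t * A3 t)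
          + A1 t ^ 2 * (B t ^ 2 + C t ^ 2) / (B t ^ 2 * C t ^ 2)) /\
       derivable_pt_lim A2 t
         ((A1 t ^ 2 - A2 t ^ 2 + A3 t ^ 2) / (A1 t * A3 t)
          - (B t ^ 2 + C t ^ 2 - 2 * A2 t ^ 2) / (B t * C t)) /\
       derivable_pt_lim A3 t
         ((A1 t ^ 2 + A2 t ^ 2 - A3 t ^ 2) / (A1 t * A2 t)
          - (B t ^ 2 + C t ^ 2 - 2 * A3 t ^ 2) / (B t * C t)) /\
       derivable_pt_lim B t
         (- (C t * A1 t + B t * A2 t + B t * A3 t) / (B t * C t)
          - (C t ^ 2 - B t ^ 2) * (A2 t + A3 t) / (2 * A2 t * A3 t * C t)) /\
       derivable_pt_lim C t
         (- (B t * A1 t + C t * A2 t + C t * A3 t) / (B t * C t)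
          - (B t ^ 2 - C t ^ 2) * (A2 t + A3 t) / (2 * A2 t * A3 t * B t))) /\
    (* smooth extension to [0, oo) with the boundary conditions at t = 0 *)
    (exists g1 g2 g3 gB gC : R -> R,
       smooth g1 /\ smooth g2 /\ smooth g3 /\ smooth gB /\ smooth gC /\
       (forall t, 0 <= t ->
          g1 t = A1 t /\ g2 t = A2 t /\ g3 t = A3 t /\ gB t = B t /\ gC t = C t) /\
       g1 0 = 0 /\ (exists d, derivable_pt_lim g1 0 d /\ Rabs d = 4) /\
       g2 0 = - g3 0 /\ g2 0 <> 0 /\
       (exists d, derivable_pt_lim g2 0 d /\ derivable_pt_lim g3 0 d) /\
       gB 0 <> 0 /\ derivable_pt_lim gB 0 0 /\
       gC 0 <> 0 /\ derivable_pt_lim gC 0 0) /\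
    (* constant sign on (0, oo) *)
    const_sign_pos A1 /\ const_sign_pos A2 /\ const_sign_pos A3 /\
    const_sign_pos B /\ const_sign_pos C).
Proof.
  idtac.
  assert (Hd : forall e t, derivable_pt_lim (fun t => eval alpha (U alpha ha0 ha1 t) e) t
                  (eval alpha (U alpha ha0 ha1 t) (dd alpha Up e)))
    by (intros; apply dd_ok; auto; apply u_deriv).
  assert (Hsm : forall e, smooth (fun t => eval alpha (U alpha ha0 ha1 t) e))
    by (intros; apply (smooth_eval alpha ha0 ha1 _ Up); apply u_deriv).
  split; [unfold Pf; ring|].
  split; [intros; apply Pf_pos; auto|].
  split.
  { intros r Hr. destruct (Rle_dec r 1) as [h|h]; auto. apply Rnot_le_lt in h.
    assert (X := Pf_pos alpha r ha0 ha1 h). lra. }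
  split; [lra|].
  split; [intros r Hr; exists (H alpha ha0 ha1 r); apply integral_ok; auto|].
  split.
  { intros t Ht. exists (1 + U alpha ha0 ha1 t * U alpha ha0 ha1 t). split.
    - assert (Hge : 1 <= 1 + U alpha ha0 ha1 t * U alpha ha0 ha1 t)
        by (assert (X := Rle_0_sqr (U alpha ha0 ha1 t)); unfold Rsqr in X; lra).
      split; auto.
      assert (I := integral_ok alpha ha0 ha1 _ Hge). rewrite H_U in I; auto.
    - intros r' [Hr' Hi]. symmetry. apply H_inv; auto. apply integral_unique; auto. }
  intros rr Hrr. cbv zeta.
  assert (Req := rr_eq alpha ha0 ha1 rr Hrr).
  assert (AE : forall t, 0 <= t -> _) by (intros t Ht; exact (A_eqs alpha ha0 ha1 rr t Ht (Req t Ht))).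
  assert (Hloc : forall (F : R -> R) e t, 0 < t ->
     (forall y, 0 <= y -> F y = eval alpha (U alpha ha0 ha1 y) e) ->
     derivable_pt_lim F t (eval alpha (U alpha ha0 ha1 t) (dd alpha Up e))).
  { intros F e t Ht HF. apply (dlim_local F (fun t => eval alpha (U alpha ha0 ha1 t) e) t _ t Ht).
    - intros y Hy. apply Rabs_def2 in Hy. apply HF. lra.
    - apply Hd. }
  split.
  { intros t Ht. assert (Ht' : 0 <= t) by lra.
    destruct (AE t Ht') as [Q1 [Q2 [Q3 [Q4 Q5]]]].
    rewrite Q1, Q2, Q3, Q4, Q5.
    destruct (ode_alg alpha ha0 ha1 (U alpha ha0 ha1 t) (U_pos alpha ha0 ha1 t Ht)) as [O1 [O2 [O3 [O4 O5]]]].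
    rewrite <- O1, <- O2, <- O3, <- O4, <- O5.
    repeat split; apply Hloc; auto; intros y Hy; apply (AE y Hy). }
  destruct (val0 alpha ha0 ha1) as [V1 [V2 [V3 [V4 [V5 [V6 [V7 [V8 [V9 V10]]]]]]]]].
  assert (U0' := U0 alpha ha0 ha1).
  split.
  { exists (fun t => eval alpha (U alpha ha0 ha1 t) e1), (fun t => eval alpha (U alpha ha0 ha1 t) e2),
      (fun t => eval alpha (U alpha ha0 ha1 t) e3), (fun t => eval alpha (U alpha ha0 ha1 t) eB),
      (fun t => eval alpha (U alpha ha0 ha1 t) eC).
    do 5 (split; [apply Hsm|]).
    split.
    { intros t Ht. destruct (AE t Ht) as [Q1 [Q2 [Q3 [Q4 Q5]]]]. repeat split; symmetry; auto. }
    cbv beta.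
    assert (D : forall e, derivable_pt_lim (fun t => eval alpha (U alpha ha0 ha1 t) e) 0
                  (eval alpha 0 (dd alpha Up e))) by (intro e; rewrite <- U0' at 2; apply Hd).
    rewrite !U0'.
    split; auto.
    split. { exists (-4). split; [rewrite <- V2; apply D|]. rewrite Rabs_left; lra. }
    split; auto. split; auto.
    split. { exists (eval alpha 0 (dd alpha Up e2)). split; [apply D|]. rewrite V5. assert (X := D e3); rewrite V6 in X; exact X. }
    split; auto. split; [assert (X := D eB); rewrite V8 in X; exact X|].
    split; auto. assert (X := D eC); rewrite V10 in X; exact X. }
  assert (Rp : forall t, 0 < t -> 1 < rr t).
  { intros t Ht. rewrite (Req t ltac:(lra)). assert (X := U_pos alpha ha0 ha1 t Ht). nra. }
  split.
  { right. intros t Ht. unfold A1f. assert (X := Rp t Ht).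
    assert (0 < sqrt (Pf alpha (rr t))) by (apply sqrt_lt_R0, Pf_pos; auto).
    assert (0 < sqrt (rr t ^ 4 - alpha ^ 4)).
    { apply sqrt_lt_R0. destruct (al4_lt alpha) as [h1 h2]; auto.
      assert (1 < rr t ^ 2) by nra. assert (1 < rr t ^4) by nra. lra. }
    unfold Rdiv. rewrite Ropp_mult_distr_l_reverse. apply Ropp_lt_gt_0_contravar.
    apply Rmult_lt_0_compat; auto. apply Rinv_0_lt_compat. nra. }
  split. { left. intros t Ht. unfold A2f. assert (X := Rp t Ht). lra. }
  split. { right. intros t Ht. unfold A3f. assert (X := Rp t Ht). lra. }
  split. { left. intros t Ht. unfold Bf. assert (X := Rp t Ht). apply sqrt_lt_R0. nra. }
  left. intros t Ht. unfold Cf. assert (X := Rp t Ht). apply sqrt_lt_R0. nra.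
Qed.
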